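(* Let $K\subseteq\mathbb{R}^n$ be a convex polytope. (a) If $K$ has $m+1$ vertices, then $\Gamma_l(K)\leq\Gamma_l(K_m^{1*})$ for all $l\in\mathbb{Z}^+$. (b) If $K$ is centrally symmetric and has $2m$ vertices, then $\Gamma_l(K)\leq\Gamma_l(K_m^{1})$ for all $l\in\mathbb{Z}^+$.
   Context: For a compact convex set $K\subseteq\mathbb{R}^d$ and $l\in\mathbb{Z}^+$, the covering functional is $\Gamma_l(K)=\inf\{\gamma>0:\exists C\subseteq\mathbb{R}^d,\ |C|=l,\ K\subseteq C+\gamma K\}$. $K_m^1=\{(x_1,\dots,x_m)\in\mathbb{R}^m:\sum_{i=1}^m|x_i|\leq1\}$ and $K_m^{1*}=\{(x_1,\dots,x_m)\in\mathbb{R}^m:\sum_{i=1}^m x_i\leq1,\ x_i\geq0\ \forall i\}$. *)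

(* Defs.v *)
From HB Require Import structures.
From mathcomp Require Import all_boot all_order all_algebra.
From mathcomp Require Import all_classical all_reals all_analysis.
Set Implicit Arguments. Unset Strict Implicit. Unset Printing Implicit Defensive.
Import Order.TTheory GRing.Theory Num.Theory.
Local Open Scope classical_set_scope.
Local Open Scope ring_scope.

Definition hull (R : realType) (d : nat) (P : seq 'rV[R]_d) : set 'rV[R]_d :=
  [set x | exists lam : 'I_(size P) -> R,
     (forall i, 0 <= lam i) /\ \sum_i lam i = 1 /\
     x = \sum_i lam i *: P`_i].

Definition polytope (R : realType) (d : nat) (K : set 'rV[R]_d) : Prop :=
  exists P : seq 'rV[R]_d, K = hull P.

Definition extreme_point (R : realType) (d : nat) (K : set 'rV[R]_d)
  (x : 'rV[R]_d) : Prop :=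
  K x /\ forall y z t, K y -> K z -> 0 < t < 1 ->
    x = (1 - t) *: y + t *: z -> y = x /\ z = x.

Definition num_vertices (R : realType) (d : nat) (K : set 'rV[R]_d) (k : nat)
  : Prop :=
  exists s : seq 'rV[R]_d, uniq s /\ size s = k /\
    forall x, extreme_point K x <-> x \in s.

Definition centrally_symmetric (R : realType) (d : nat) (K : set 'rV[R]_d)
  : Prop :=
  exists c : 'rV[R]_d, forall x, K x <-> K (2 *: c - x).

Definition translates (R : realType) (d l : nat) (C : 'I_l -> 'rV[R]_d)
  (g : R) (K : set 'rV[R]_d) : set 'rV[R]_d :=
  [set z | exists i y, K y /\ z = C i + g *: y].

(* Covering functional Gamma_l(K), as an extended real (inf of empty = +oo). *)
Definition Gamma (R : realType) (d l : nat) (K : set 'rV[R]_d) : \bar R :=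
  ereal_inf [set (g%:E)%E | g in
    [set g : R | 0 < g /\ exists C : 'I_l -> 'rV[R]_d, K `<=` translates C g K]].

Definition K1star (R : realType) (m : nat) : set 'rV[R]_m :=
  [set x | \sum_i x ord0 i <= 1 /\ forall i, 0 <= x ord0 i].

Definition K1 (R : realType) (m : nat) : set 'rV[R]_m :=
  [set x | \sum_i `|x ord0 i| <= 1].

(* Main.v *)
Require Import Defs.
From HB Require Import structures.
From mathcomp Require Import all_boot all_order all_algebra.
From mathcomp Require Import all_classical all_reals all_analysis.
Import Order.TTheory GRing.Theory Num.Theory.
Local Open Scope classical_set_scope.
Local Open Scope ring_scope.
From mathcomp Require Import ring lra.
Set Implicit Arguments. Unset Strict Implicit.

Definition cvx (R : realType) (d : nat) (C : set 'rV[R]_d) : Prop :=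
  forall a b (t : R), C a -> C b -> 0 <= t <= 1 -> C ((1 - t) *: a + t *: b).

Lemma conv_comb (R : realType) d (C : set 'rV[R]_d) : cvx C ->
  forall k (lam : 'I_k -> R) (q : 'I_k -> 'rV[R]_d),
  (forall i, 0 <= lam i) -> \sum_i lam i = 1 ->
  (forall i, 0 < lam i -> C (q i)) -> C (\sum_i lam i *: q i).
Proof.
move=> cC; elim=> [|k IH] lam q l0 l1 lC.
  by move: l1; rewrite big_ord0 => /eqP; rewrite eq_sym oner_eq0.
rewrite big_ord_recl; move: l1; rewrite big_ord_recl => l1.
set S := \sum_(i < k) lam (lift ord0 i) in l1.
have S0 : 0 <= S by apply: sumr_ge0 => i _.
have L0 := l0 ord0.
have [S00|Spos] := eqVneq S 0.
  have z i : lam (lift ord0 i) = 0.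
    by apply: (psumr_eq0P (P:=predT) (F:=fun j => lam (lift ord0 j))) => // j _.
  have -> : \sum_(i < k) lam (lift ord0 i) *: q (lift ord0 i) = 0.
    by apply: big1 => i _; rewrite z scale0r.
  have h1 : lam ord0 = 1 by move: l1; rewrite S00 addr0.
  rewrite h1 scale1r addr0; apply: lC; by rewrite h1.

have Sp : 0 < S by rewrite lt_def Spos S0.
pose lam' i := lam (lift ord0 i) / S.
have H' := IH lam' (fun i => q (lift ord0 i)).
have X : C (\sum_i lam' i *: q (lift ord0 i)).
  apply: H'.
  - by move=> i; rewrite /lam' divr_ge0.
  - by rewrite /lam' -mulr_suml divff.
  - move=> i; rewrite /lam' => h; apply: lC; rewrite pmulr_lgt0 // in h.
    by rewrite invr_gt0.
have -> : \sum_(i < k) lam (lift ord0 i) *: q (lift ord0 i) =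
   S *: \sum_i lam' i *: q (lift ord0 i).
  rewrite scaler_sumr; apply: eq_bigr => i _; rewrite scalerA /lam'.
  by rewrite mulrCA divff // mulr1.
have -> : lam ord0 = 1 - S by rewrite -l1 addrK.
have [L00|L0p] := eqVneq (lam ord0) 0.
  have -> : S = 1 by move: l1; rewrite L00 add0r.
  by rewrite subrr scale0r add0r scale1r.
apply: cC => //.
  by apply: lC; rewrite lt_def L0p L0.
by rewrite S0 /= -l1 lerDr.
Qed.


Lemma hull_cvx (R : realType) d (P : seq 'rV[R]_d) : cvx (hull P).
Proof.
move=> a b t [al [al0 [al1 ->]]] [be [be0 [be1 ->]]] /andP[t0 t1].
exists (fun i => (1 - t) * al i + t * be i); split; [|split].
- by move=> i; rewrite addr_ge0 // mulr_ge0 // subr_ge0.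
- by rewrite big_split /= -!mulr_sumr al1 be1 !mulr1 subrK.
- rewrite !scaler_sumr -big_split /=; apply: eq_bigr => i _.
  by rewrite [RHS]scalerDl !scalerA.
Qed.

Lemma hull_mem (R : realType) d (P : seq 'rV[R]_d) x : x \in P -> hull P x.
Proof.
move=> xP; rewrite -index_mem in xP.
exists (fun i => (i == Ordinal xP)%:R); split; [|split].
- by move=> i; rewrite ler0n.
- rewrite (bigD1 (Ordinal xP)) //= eqxx big1 ?addr0 // => i /negbTE -> //.
- rewrite (bigD1 (Ordinal xP)) //= eqxx big1 ?addr0.
    by rewrite scale1r nth_index // -index_mem.
  by move=> i /negbTE ->; rewrite scale0r.
Qed.

Lemma hull_min (R : realType) d (P : seq 'rV[R]_d) (C : set 'rV[R]_d) :
  cvx C -> (forall x, x \in P -> C x) -> hull P `<=` C.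
Proof.
move=> cC PC x [lam [l0 [l1 ->]]]; apply: conv_comb => // i _.
by apply: PC; rewrite mem_nth.
Qed.

Lemma hull_sub (R : realType) d (P Q : seq 'rV[R]_d) :
  {subset P <= Q} -> hull P `<=` hull Q.
Proof. by move=> PQ; apply: hull_min; [exact: hull_cvx|move=> x /PQ; exact: hull_mem]. Qed.

Definition aff (R : realType) m n (b : 'rV[R]_n) (A : 'M[R]_(m, n)) (x : 'rV[R]_m) :=
  b + x *m A.

Lemma aff_comb (R : realType) m n (b : 'rV[R]_n) (A : 'M[R]_(m, n)) x y t :
  aff b A ((1 - t) *: x + t *: y) = (1 - t) *: aff b A x + t *: aff b A y.
Proof.
rewrite /aff mulmxDl -!scalemxAl !scalerDr addrACA; congr (_ + _).
by rewrite -scalerDl subrK scale1r.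
Qed.

Lemma aff_cvx (R : realType) m n (b : 'rV[R]_n) (A : 'M[R]_(m, n)) L :
  cvx L -> cvx (aff b A @` L).
Proof.
move=> cL _ _ t [x Lx <-] [y Ly <-] t01.
by exists ((1 - t) *: x + t *: y); [exact: cL|rewrite aff_comb].
Qed.


Lemma gamma_le (R : realType) d d' l (K : set 'rV[R]_d) (L : set 'rV[R]_d') :
  (forall g (C : 'I_l -> 'rV_d'), 0 < g -> L `<=` translates C g L ->
     exists C' : 'I_l -> 'rV_d, K `<=` translates C' g K) ->
  (Gamma l K <= Gamma l L)%E.
Proof.
move=> H; apply: le_ereal_inf => _ [g [g0 [C hC]] <-].
exists g => //; split => //; exact: H g C g0 hC.
Qed.

Lemma gamma_aff (R : realType) m n l (K : set 'rV[R]_n) (L : set 'rV[R]_m)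
  (b : 'rV[R]_n) (A : 'M[R]_(m, n)) :
  K = aff b A @` L -> (Gamma l K <= Gamma l L)%E.
Proof.
move=> KL; apply: gamma_le => g C g0 LC.
exists (fun i => aff b A (C i) - g *: b) => z.
rewrite KL => -[x Lx <-]; have [i [y [Ly ->]]] := LC x Lx.
exists i, (aff b A y); split; first by exists y.
rewrite /aff mulmxDl -scalemxAl scalerDr; set u := y *m A; set v := C i *m A.
by rewrite !addrA subrK.
Qed.


Lemma ext_of_not_hull (R : realType) d (P : seq 'rV[R]_d) p :
  p \in P -> ~ hull (seq.filter (predC1 p) P) p -> extreme_point (hull P) p.
Proof.
move=> pP nQ; split; first exact: hull_mem.
move=> y z t [al [al0 [al1 ey]]] [be [be0 [be1 ez]]] /andP[t0 t1] ep.
pose mu i := (1 - t) * al i + t * be i.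
have mu0 i : 0 <= mu i by rewrite /mu addr_ge0 // mulr_ge0 // ?subr_ge0 ltW.
have mu1 : \sum_i mu i = 1.
  by rewrite /mu big_split /= -!mulr_sumr al1 be1 !mulr1 subrK.
have emu : p = \sum_i mu i *: P`_i.
  rewrite ep ey ez !scaler_sumr -big_split /=; apply: eq_bigr => i _.
  by rewrite [RHS]scalerDl !scalerA.
pose N := \sum_(i : 'I_(size P) | P`_i != p) mu i.
have N0 : 0 <= N by apply: sumr_ge0.
have [NZ|NP] := eqVneq N 0.
  have mz (i : 'I_(size P)) : P`_i != p -> mu i = 0.
    by apply: (psumr_eq0P (P := fun i : 'I_(size P) => P`_i != p) (F := mu)) => // j _.
  have abz (i : 'I_(size P)) : P`_i != p -> al i = 0 /\ be i = 0.
    move=> /mz; rewrite /mu => h.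
    have a0 : 0 <= (1 - t) * al i by rewrite mulr_ge0 // subr_ge0 ltW.
    have b0 : 0 <= t * be i by rewrite mulr_ge0 // ltW.
    have ha : (1 - t) * al i = 0 by apply/eqP; rewrite eq_le a0 andbT -h lerDl.
    have hb : t * be i = 0 by move: h; rewrite ha add0r.
    move: ha hb => /eqP; rewrite mulf_eq0 subr_eq0 => /orP[/eqP t1'|/eqP ->].
      by move: t1; rewrite t1' ltxx.
    by move=> /eqP; rewrite mulf_eq0 => /orP[/eqP t0'|/eqP ->] //; move: t0; rewrite t0' ltxx.
  have key (ga : 'I_(size P) -> R) : \sum_i ga i = 1 ->
     (forall i : 'I_(size P), P`_i != p -> ga i = 0) -> \sum_i ga i *: P`_i = p.
    move=> g1 gz; rewrite -[RHS]scale1r -g1 scaler_suml; apply: eq_bigr => i _.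
    by have [/eqP ->|/gz ->] := boolP (P`_i == p); rewrite ?scale0r.
  split.
    by rewrite ey; apply: key => // i /abz [].
  by rewrite ez; apply: key => // i /abz [].
exfalso; apply: nQ.
have Np : 0 < N by rewrite lt_def NP N0.
pose nu (i : 'I_(size P)) := if P`_i != p then mu i / N else 0.
have Ep : p = \sum_i nu i *: P`_i.
  have E : \sum_(i : 'I_(size P) | P`_i != p) mu i *: P`_i = N *: p.
    have := emu; rewrite (bigID (fun i : 'I_(size P) => P`_i != p)) /=.
    have -> : \sum_(i : 'I_(size P) | ~~ (P`_i != p)) mu i *: P`_i = (\sum_(i : 'I_(size P) | ~~ (P`_i != p)) mu i) *: p.
      by rewrite scaler_suml; apply: eq_bigr => i /negPn /eqP ->.
    have -> : \sum_(i : 'I_(size P) | ~~ (P`_i != p)) mu i = 1 - N.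
      by rewrite -mu1 [in RHS](bigID (fun i : 'I_(size P) => P`_i != p)) /= addrAC subrr add0r.
    move=> h; apply/eqP; rewrite -(subr_eq0 _ (N *: p)); apply/eqP.
    have h2 : p - (1 - N) *: p = \sum_(i : 'I_(size P) | P`_i != p) mu i *: P`_i.
      by rewrite {1}h addrK.
    by rewrite -h2 scalerBl scale1r opprB addrA addrAC subrr add0r subrr.
  rewrite (bigID (fun i : 'I_(size P) => P`_i != p)) /= [X in _ + X]big1 ?addr0; last first.
    by move=> i; rewrite /nu => /negbTE ->; rewrite /= scale0r.
  rewrite -[LHS]scale1r -(mulVf (lt0r_neq0 Np)) -scalerA -E scaler_sumr.
  apply: eq_bigr => i h; rewrite /nu h scalerA; congr (_ *: _).
  by rewrite mulrC.
rewrite [X in hull _ X]Ep; apply: conv_comb; first exact: hull_cvx.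
- by move=> i; rewrite /nu; case: ifP => _ //; rewrite divr_ge0 // ltW.
- rewrite (bigID (fun i : 'I_(size P) => P`_i != p)) /= [X in _ + X]big1 ?addr0; last first.
    by move=> i; rewrite /nu => /negbTE ->.
  rewrite (eq_bigr (fun i => mu i / N)); last by move=> i; rewrite /nu => ->.
  by rewrite -mulr_suml divff // lt0r_neq0.
- move=> i; rewrite /nu; case: ifP => [h _|_]; last by rewrite ltxx.
  by apply: hull_mem; rewrite mem_filter /= h mem_nth.
Qed.


Lemma polytope_ext (R : realType) d (K : set 'rV[R]_d) : polytope K ->
  exists P, K = hull P /\ forall p, p \in P -> extreme_point K p.
Proof.
move=> [P ->]; move: {2}(size P).+1 (ltnSn (size P)) => n.
elim: n P => [//|n IH] P sP.
have [allE|] := pselect (forall p, p \in P -> extreme_point (hull P) p).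
  by exists P.
move=> /existsNP [p /not_implyP [pP nE]].
have hQ : hull (seq.filter (predC1 p) P) p.
  by apply: contrapT => h; apply: nE; exact: ext_of_not_hull.
have eq : hull P = hull (seq.filter (predC1 p) P).
  apply/seteqP; split; last by apply: hull_sub => x; rewrite mem_filter => /andP[].
  apply: hull_min; first exact: hull_cvx.
  move=> x xP; have [/eqP -> //|xp] := boolP (x == p).
  by apply: hull_mem; rewrite mem_filter /= xp.
rewrite eq; apply: IH.
rewrite size_filter; rewrite ltnS in sP; apply: (leq_trans _ sP).
have := count_predC (pred1 p) P.
have : (0 < count (pred1 p) P)%N by rewrite -has_count has_pred1.
move=> h1 h2; rewrite -h2 -[X in (X < _)%N]add0n ltn_add2r //.
Qed.

Lemma hull_vertices (R : realType) d (K : set 'rV[R]_d) (s : seq 'rV[R]_d) :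
  polytope K -> (forall x, extreme_point K x <-> x \in s) -> K = hull s.
Proof.
move=> /polytope_ext [P [KP PE]] sE.
apply/seteqP; split.
  by rewrite KP; apply: hull_sub => x /PE /sE.
apply: hull_min; first by rewrite KP; exact: hull_cvx.
by move=> x /sE [].
Qed.


Lemma aff_rows (R : realType) m n (b : 'rV[R]_n) (u : 'I_m -> 'rV[R]_n) x :
  aff b (\matrix_i u i) x = b + \sum_i x 0 i *: u i.
Proof. by rewrite /aff mulmx_sum_row; congr (_ + _); apply: eq_bigr => i _; rewrite rowK. Qed.

Lemma sumU (R : realType) k (a : R) (f : 'I_k -> R) :
  \sum_(j < k.+1) (if unlift ord0 j is Some i then f i else a) = a + \sum_i f i.
Proof. by rewrite big_ord_recl unlift_none; congr (_ + _); apply: eq_bigr => i _; rewrite liftK. Qed.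

Lemma sumU2 (R : realType) n k (a : R) (f : 'I_k -> R) (v0 : 'rV[R]_n) s' :
  size s' = k ->
  \sum_(j < k.+1) (if unlift ord0 j is Some i then f i else a) *: (v0 :: s')`_j
  = a *: v0 + \sum_i f i *: s'`_i.
Proof.
move=> sk; rewrite big_ord_recl unlift_none; congr (_ + _); apply: eq_bigr => i _.
by rewrite liftK lift0.
Qed.

Lemma part_a (R : realType) (n m : nat) (K : set 'rV[R]_n) :
  polytope K -> num_vertices K m.+1 ->
  forall l : nat, (Gamma l K <= Gamma l (@K1star R m))%E.
Proof.
move=> pK [s [us [ss sE]]] l.
have KE := hull_vertices pK sE.
case: s us ss sE KE => [//|v0 s'] _ [ms] _ KE; subst m.
apply: (@gamma_aff _ _ _ _ _ _ v0 (\matrix_i (s'`_i - v0))).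
rewrite KE; apply/seteqP; split.
  move=> z [lam [l0 [l1 ->]]].
  exists (\row_i lam (lift ord0 i)).
    split; last by move=> i; rewrite mxE.
    move: l1; rewrite big_ord_recl => l1.
    under eq_bigr do rewrite mxE.
    by rewrite -l1 lerDr.
  rewrite aff_rows big_ord_recl /=.
  move: l1; rewrite big_ord_recl => l1.
  have -> : lam ord0 = 1 - \sum_(i < size s') lam (lift ord0 i) by rewrite -l1 addrK.
  under eq_bigr do rewrite mxE scalerBr.
  rewrite big_split /= sumrN -scaler_suml scalerBl scale1r.
  by rewrite -addrA; congr (_ + _); rewrite addrC; congr (_ + _).
move=> _ [x [x1 x0] <-].
exists (fun j : 'I_(size s').+1 => if unlift ord0 j is Some i then x 0 i else 1 - \sum_i x 0 i).
split; [|split].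
- move=> j; case: (unlift ord0 j) => [i|] //; by rewrite subr_ge0.
- by rewrite (sumU (k:=size s')) subrK.
rewrite aff_rows (sumU2 (k:=size s')) //.
under eq_bigr do rewrite scalerBr.
rewrite big_split /= sumrN -scaler_suml scalerBl scale1r.
by rewrite -addrA; congr (_ + _); rewrite addrC.
Qed.


Lemma pairing (T : eqType) (r : T -> T) : involutive r ->
  forall s : seq T, uniq s -> (forall x, x \in s -> r x \in s) ->
  (forall x, x \in s -> r x != x) -> exists w, perm_eq s (w ++ map r w).
Proof.
move=> rK s; move: {2}(size s).+1 (ltnSn (size s)) => n.
elim: n s => [//|n IH] [|x t] sn us cl nf; first by exists [::].
have rxt : r x \in t.
  have := cl x (mem_head _ _); rewrite inE => /orP[/eqP h|//].
  by move: (nf x (mem_head _ _)); rewrite h eqxx.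
move: us => /= /andP[xt ut].
have [w pw] : exists w, perm_eq (rem (r x) t) (w ++ map r w).
  apply: IH.
  - rewrite size_rem //; move: sn => /=; case: (size t) => //= k; rewrite !ltnS.
    by move=> h; apply: leq_trans h; apply: leqnSn.
  - exact: rem_uniq.
  - move=> y; rewrite !mem_rem_uniq // => /andP[yrx yt] /=.
    have : r y \in x :: t by apply: cl; rewrite inE yt orbT.
    rewrite inE => /orP[/eqP ryx|ryt].
      by move: yrx; rewrite -ryx rK eqxx.
    rewrite inE ryt andbT; apply/negP => /eqP h.
    by move: xt; rewrite -(rK x) -h rK yt.
  - move=> y; rewrite mem_rem_uniq // => /andP[_ yt]; apply: nf.
    by rewrite inE yt orbT.
exists (x :: w); rewrite /= perm_cons.
apply: (perm_trans (perm_to_rem rxt)).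
apply: (perm_trans (y := r x :: (w ++ map r w))); first by rewrite perm_cons.
by rewrite -cat1s perm_catCA.
Qed.


Lemma mid (R : realType) n (c y : 'rV[R]_n) :
  (1 - 2^-1) *: y + 2^-1 *: (2 *: c - y) = c.
Proof.
have h2 : (1 - 2^-1 : R) = 2^-1 by field.
by rewrite h2 -scalerDr addrC subrK scalerA mulVf ?scale1r // pnatr_eq0.
Qed.

Lemma sumU3 (R : realType) n k (a : R) (b : 'rV[R]_n) (f : 'I_k -> R) g :
  \sum_(j < k.+1) (if unlift ord0 j is Some i then f i else a) *:
                  (if unlift ord0 j is Some i then g i else b)
  = a *: b + \sum_i f i *: g i.
Proof.
by rewrite big_ord_recl unlift_none; congr (_ + _); apply: eq_bigr => i _; rewrite liftK.
Qed.

Lemma K1_cvx (R : realType) m : cvx (@K1 R m).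
Proof.
move=> a b t Ka Kb /andP[t0 t1]; rewrite /K1 /=.
apply: (le_trans (y := \sum_i ((1 - t) * `|a ord0 i| + t * `|b ord0 i|))).
  apply: ler_sum => i _; rewrite !mxE.
  apply: (le_trans (ler_normD _ _)).
  by rewrite !normrM (ger0_norm t0) ger0_norm ?subr_ge0.
rewrite big_split /= -!mulr_sumr.
have h1 : (1 - t) * \sum_i `|a ord0 i| <= 1 - t by rewrite ler_piMr // subr_ge0.
have h2 : t * \sum_i `|b ord0 i| <= t by rewrite ler_piMr.
lra.
Qed.

Lemma part_b (R : realType) (n m : nat) (K : set 'rV[R]_n) :
  polytope K -> centrally_symmetric K -> num_vertices K (2 * m)%N ->
  forall l : nat, (Gamma l K <= Gamma l (@K1 R m))%E.
Proof.
move=> pK [c sym] [s [us [ss sE]]] l.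
have KE := hull_vertices pK sE.
have cvK : cvx K by rewrite KE; exact: hull_cvx.
case: m ss => [|m'] ss.
  have s0 : s = [::] by case: s ss {us sE KE cvK}.
  apply: gamma_le => g C _ _; exists (fun _ => 0) => z.
  rewrite KE s0 => -[lam [_ [l1 _]]]; exfalso; move: l1.
  by rewrite big_ord0 => /eqP; rewrite eq_sym oner_eq0.
pose r x := 2 *: c - x.
have Kr x : K x -> K (r x) := (sym x).1.
have rK : involutive r by move=> x; rewrite /r opprB addrC subrK.
have Er x : extreme_point K x -> extreme_point K (r x).
  move=> [Kx ex]; split; first exact: Kr.
  move=> y z t Ky Kz t01 e.
  have e' : x = (1 - t) *: r y + t *: r z.
    rewrite -[x]rK e /r !scalerBr addrACA -scalerDl subrK scale1r opprD.
    by [].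
  have [ry rz] := ex _ _ t (Kr _ Ky) (Kr _ Kz) t01 e'.
  by split; [rewrite -ry|rewrite -rz]; rewrite rK.
have sK x : x \in s -> K x by move/sE => [].
have nf x : x \in s -> r x != x.
  move=> xs; apply/eqP => rx.
  have [Kx ex] := (sE x).2 xs.
  have xc : x = c.
    by have := mid c x; rewrite -/(r x) rx -scalerDl subrK scale1r.
  have all_x y : K y -> y = x.
    move=> Ky; have h : 0 < (2^-1 : R) < 1.
      by apply/andP; split; [rewrite invr_gt0 ltr0n | rewrite invf_lt1 // ?ltr0n ?ltr1n].
    have [] := ex y (r y) _ Ky (Kr _ Ky) h; last by []. by rewrite xc; symmetry; exact: mid.
  move: us ss; case: s sE KE sK xs => [|a [|b t]] //= sE KE sK xs; first by move=> _ h; have := congr1 odd h; rewrite oddM.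
  move=> /and3P[]; rewrite in_cons negb_or => /andP[ab _] _ _ _; move/negP: ab; apply; apply/eqP.
  have Ka : K a by apply: sK; exact: mem_head.
  have Kb : K b by apply: sK; rewrite in_cons mem_head orbT.
  by rewrite (all_x a Ka) (all_x b Kb).
have [w pw] : exists w, perm_eq s (w ++ map r w).
  apply: pairing => // x xs; apply/sE; apply: Er; exact/sE.
have sw : size w = m'.+1.
  by move: (perm_size pw); rewrite ss size_cat size_map addnn -mul2n => /eqP; rewrite eqn_mul2l /= => /eqP.
have wK (i : 'I_m'.+1) : K w`_i.
  by apply: sK; rewrite (perm_mem pw) mem_cat mem_nth ?sw.
have cK : K c.
  rewrite -(mid c w`_0); apply: cvK; [exact: wK ord0|exact: Kr (wK ord0)|].
  by rewrite invr_ge0 ler0n /= invf_le1 ?ltr0n // ler1n.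
apply: (@gamma_aff _ _ _ _ _ _ c (\matrix_i (w`_i - c))).
apply/seteqP; split.
  have ex_e (i : 'I_m'.+1) (sg : R) : `|sg| = 1 ->
      (aff c (\matrix_i (w`_i - c)) @` @K1 R m'.+1) (c + sg *: (w`_i - c)).
    move=> s1; exists (\row_j (if j == i then sg else 0)).
      rewrite /K1 /= (bigD1 i) //= mxE eqxx big1 ?addr0 ?s1 //.
      by move=> j /negbTE ji; rewrite mxE ji normr0.
    rewrite aff_rows (bigD1 i) //= mxE eqxx big1 ?addr0 //.
    by move=> j /negbTE ji; rewrite mxE ji scale0r.
  rewrite {1}KE; apply: hull_min; first exact/aff_cvx/K1_cvx.
  move=> y ys; have : y \in w ++ map r w by rewrite -(perm_mem pw).
  rewrite mem_cat => /orP[yw|/mapP[v vw ->]].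
    have /(nthP 0) [k kw <-] := yw; rewrite sw in kw.
    have := ex_e (Ordinal kw) 1; rewrite normr1 scale1r.
    by rewrite addrC subrK; apply.
  have /(nthP 0) [k kw <-] := vw; rewrite sw in kw.
  have := ex_e (Ordinal kw) (-1); rewrite normrN normr1 scaleN1r /= opprB.
  by rewrite addrA -mulr2n -scaler_nat; apply.
move=> _ [x x1 <-].
pose lam (j : 'I_m'.+2) := if unlift ord0 j is Some i then `|x ord0 i| else 1 - \sum_i `|x ord0 i|.
pose q (j : 'I_m'.+2) := if unlift ord0 j is Some i then
   (if 0 <= x ord0 i then w`_i else r w`_i) else c.
have -> : aff c (\matrix_i (w`_i - c)) x = \sum_j lam j *: q j.
  rewrite sumU3 aff_rows.
  have E i : `|x ord0 i| *: (if 0 <= x ord0 i then w`_i else r w`_i) =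
             x 0 i *: (w`_i - c) + `|x ord0 i| *: c.
    case: ifP => h.
      by rewrite ger0_norm // scalerBr subrK.
    rewrite ltr0_norm ?ltNge ?h // /r !scalerBr !scaleNr opprK scaler_nat -scalerMnr.
    by rewrite mulr2n opprD addrC addrA.
  rewrite (eq_bigr _ (fun i _ => E i)) big_split /= -scaler_suml.
  by rewrite [RHS]addrCA -scalerDl subrK scale1r addrC.
apply: conv_comb => //.
- by move=> j; rewrite /lam; case: (unlift ord0 j) => [_|] //; rewrite subr_ge0; exact: x1.
- by rewrite /lam sumU subrK.
- move=> j _; rewrite /q; case: (unlift ord0 j) => // i.
  by case: ifP => _; [exact: wK|exact: Kr (wK i)].
Qed.

Unset Implicit Arguments.

Theorem theorem4p2 (R : realType) (n m : nat) (K : set 'rV[R]_n) :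
  polytope K ->
  (num_vertices K m.+1 ->
     forall l : nat, (0 < l)%N -> (Gamma l K <= Gamma l (@K1star R m))%E) /\
  (centrally_symmetric K -> num_vertices K (2 * m)%N ->
     forall l : nat, (0 < l)%N -> (Gamma l K <= Gamma l (@K1 R m))%E).
Proof.
move=> pK; split.
  by move=> nv l _; exact: part_a.
by move=> cs nv l _; exact: part_b.
Qed.
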